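(* Let $X$ be a locally convex space, let $T:X\rightrightarrows X^{*}$, and let $V\subset X$ with $V\cap D(T)\neq\emptyset$. The following are equivalent: (i) $V$ locates $T$; (ii) $T$ is $V$-NI and $\operatorname{Pr}_{X}[\varphi_{T|_{V}}=c]\cap V\subset D(T)$; (iii) $\operatorname{Pr}_{X}(\operatorname{dom}\varphi_{T|_{V}})\cap V\subset\operatorname{Pr}_{X}([\varphi_{T|_{V}}\ge c]\cap\operatorname{dom}\varphi_{T|_{V}})$ and $\operatorname{Pr}_{X}[\varphi_{T|_{V}}=c]\cap V\subset D(T)$. If, in addition, $T|_{V}\in\mathcal{M}(X)$, then $V$ locates $T$ if and only if $T$ is $V$-NI and $\operatorname{Pr}_{X}[\varphi_{T|_{V}}=c]\cap V=D(T)\cap V$.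
   Context: $X$ is a non-trivial Hausdorff locally convex space, $X^*$ its dual, $c(x,x^* )=\langle x,x^*\rangle$ on $Z=X\times X^*$. Operators are identified with their graphs; $D(T)$ is the domain; $T|_V$ has graph $\operatorname{Graph}T\cap(V\times X^* )$; $\operatorname{Pr}_X$ is the projection onto $X$. $\varphi_{T}(x,x^{*})=\sup\{\langle x,u^{*}\rangle+\langle u,x^{*}\rangle-\langle u,u^{*}\rangle\mid(u,u^{*})\in T\}$ ($\sup\emptyset=-\infty$); $\operatorname{dom}f=\{f<\infty\}$; $[f\le g]=\{z\mid f(z)\le g(z)\}$, etc. $\mathcal M(X)$: monotone operators with non-empty graph. $V$ locates $T$ if $\operatorname{Pr}_X([\varphi_{T|_V}\le c])\cap V\subset D(T)$; $T$ is $V$-NI if $\varphi_{T|_V}\ge c$ on $V\times X^*$. *)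

(* Defs.v *)
From HB Require Import structures.
From mathcomp Require Import all_boot all_order all_algebra.
From mathcomp Require Import all_classical all_reals all_analysis.
Set Implicit Arguments. Unset Strict Implicit. Unset Printing Implicit Defensive.
Import Order.TTheory GRing.Theory Num.Theory.
Local Open Scope classical_set_scope.
Local Open Scope ring_scope.

(* X : a real locally convex space (tvsType R, locally convex by definition).
   X^* : the topological dual = continuous linear functionals X -> R. *)
Section Dual.
Context (R : realType) (X : tvsType R).

Definition is_dual (f : X -> R) : Prop :=
  (forall (a : R) (x y : X), f (a *: x + y) = a * f x + f y) /\ continuous (f : X -> R^o).

Definition dual := {f : X -> R | is_dual f}.

Definition pairing (x : X) (xs : dual) : R := proj1_sig xs x.
Definition cpl (z : X * dual) : R := pairing z.1 z.2.

(* operators identified with their graphs *)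
Definition domain (T : set (X * dual)) : set X := [set x | exists xs, T (x, xs)].
Definition restr (T : set (X * dual)) (V : set X) : set (X * dual) :=
  [set z | T z /\ V z.1].
Definition PrX (A : set (X * dual)) : set X := fst @` A.

(* Fitzpatrick-type function; ereal_sup set0 = -oo *)
Definition phi (T : set (X * dual)) (z : X * dual) : \bar R :=
  ereal_sup [set ((pairing z.1 u.2 + pairing u.1 z.2 - pairing u.1 u.2)%:E)%E
            | u in T].

Definition edom (f : X * dual -> \bar R) : set (X * dual) := [set z | (f z < +oo)%E].

Definition monotone_op (T : set (X * dual)) : Prop :=
  forall z w, T z -> T w -> 0 <= pairing (z.1 - w.1) z.2 - pairing (z.1 - w.1) w.2.
Definition Mon (T : set (X * dual)) : Prop := monotone_op T /\ T !=set0.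

Definition locates (V : set X) (T : set (X * dual)) : Prop :=
  PrX [set z | (phi (restr T V) z <= (cpl z)%:E)%E] `&` V `<=` domain T.

Definition V_NI (V : set X) (T : set (X * dual)) : Prop :=
  forall z : X * dual, V z.1 -> ((cpl z)%:E <= phi (restr T V) z)%E.

End Dual.

(* Main.v *)
Require Import Defs.
From HB Require Import structures.
From mathcomp Require Import all_boot all_order all_algebra.
From mathcomp Require Import all_classical all_reals all_analysis.
From mathcomp Require Import ring lra.
Import Order.TTheory GRing.Theory Num.Theory.
Local Open Scope classical_set_scope.
Local Open Scope ring_scope.

Section Aux.
Context (R : realType) (X : tvsType R).
Local Notation D := (dual X).

Lemma comb_dual (xs ys : D) (t : R) :
  is_dual (fun v : X => pairing v xs + t * (pairing v ys - pairing v xs)).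
Proof.
case: xs => [f [lf cf]]; case: ys => [g [lg cg]]; rewrite /pairing /=; split.
- move=> a x y; rewrite lf lg; ring.
- move=> x; have := @continuousD _ R^o X f (fun v => t * (g v - f v)) x; apply; first exact: cf.
  apply: cvgMl_tmp.
  have := @continuousB _ R^o X g f x; apply; [exact: cg|exact: cf].
Qed.

Definition comb xs ys t : D := exist _ _ (comb_dual xs ys t).

Lemma combE v xs ys t :
  pairing v (comb xs ys t) = pairing v xs + t * (pairing v ys - pairing v xs).
Proof. by []. Qed.

Lemma pairingB (a b : X) (w : D) : pairing (a - b) w = pairing a w - pairing b w.
Proof.
case: w => f [lf cf]; rewrite /pairing /=.
have -> : a - b = (-1) *: b + a by rewrite scaleN1r addrC.
rewrite lf; ring.
Qed.

Definition term (z u : X * D) : R :=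
  pairing z.1 u.2 + pairing u.1 z.2 - pairing u.1 u.2.

Lemma phi_le (T : set (X * D)) z r :
  (forall u, T u -> term z u <= r) -> (phi T z <= r%:E)%E.
Proof. move=> H; apply: ge_ereal_sup => _ [u Tu <-]; rewrite lee_fin; exact: H. Qed.

Lemma phi_ge (T : set (X * D)) z u : T u -> ((term z u)%:E <= phi T z)%E.
Proof. move=> Tu; apply: ereal_sup_ubound; by exists u. Qed.
Arguments phi_ge [T] z [u].

Lemma phi_lt (T : set (X * D)) z r : (phi T z < r%:E)%E ->
  exists d, 0 < d /\ forall u, T u -> term z u <= r - d.
Proof.
case E: (phi T z) => [p| |] //.
- rewrite lte_fin => hp; exists (r - p); split; first by rewrite subr_gt0.
  move=> u Tu; have := phi_ge z Tu; rewrite E lee_fin => h.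
  by rewrite opprB addrC subrK.
- move=> _; exists 1; split => // u Tu; have := phi_ge z Tu; by rewrite E.
Qed.

Lemma phi_fin (T : set (X * D)) z : (phi T z < +oo)%E ->
  exists K, 0 <= K /\ forall u, T u -> term z u - cpl z <= K.
Proof.
case E: (phi T z) => [p| |] // _.
- exists `|p - cpl z|; split => // u Tu.
  have := phi_ge z Tu; rewrite E lee_fin => h.
  apply: le_trans (ler_norm _); rewrite lerD2r //.
- exists 0; split => // u Tu; have := phi_ge z Tu; by rewrite E.
Qed.

Lemma base (T : set (X * D)) V x y w : V x -> T (x, y) ->
  ((cpl (x, w))%:E <= phi (restr T V) (x, w))%E.
Proof.
move=> Vx Txy; have := @phi_ge (restr T V) (x, w) (x, y) (conj Txy Vx).
by rewrite /term /= [X in X - _]addrC addrK.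
Qed.

Lemma hard (T : set (X * D)) x xs ys :
  (forall u, T u -> term (x, xs) u <= cpl (x, xs)) ->
  ((cpl (x, ys))%:E <= phi T (x, ys))%E -> (phi T (x, ys) < +oo)%E ->
  exists w, phi T (x, w) = (cpl (x, w))%:E.
Proof.
move=> Ha Hc Hf.
have [K [K0 HK]] := phi_fin _ _ Hf.
pose a u := term (x, xs) u - cpl (x, xs).
pose b u := term (x, ys) u - cpl (x, ys).
pose G u t := (1 - t) * a u + t * b u.
have FG : forall u t, term (x, comb xs ys t) u - cpl (x, comb xs ys t) = G u t.
  by move=> u t; rewrite /G /a /b /term /cpl /pairing /=; rewrite /pairing; ring.
have ha : forall u, T u -> a u <= 0 by move=> u Tu; rewrite /a subr_le0; exact: Ha.
pose S := [set t : R | 0 <= t <= 1 /\ forall u, T u -> G u t <= 0].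
have S0 : S 0 by split; [rewrite lexx ler01|move=> u Tu; rewrite /G subr0 mul1r mul0r addr0; exact: ha].
have Sub : ubound S 1 by move=> t [/andP[]].
have hS : has_sup S by split; [exists 0|exists 1].
pose s := sup S.
have s0 : 0 <= s by exact: sup_upper_bound.
have s1 : s <= 1 by apply: ge_sup => //; exists 0.
have Gs : forall u, T u -> G u s <= 0.
  move=> u Tu; have hau := ha u Tu.
  have -> : G u s = a u + s * (b u - a u) by rewrite /G; ring.
  have [hd|hd] := leP (b u - a u) 0.
    have : s * (b u - a u) <= 0 by rewrite mulr_ge0_le0.
    lra.
  have : s <= - a u / (b u - a u).
    apply: ge_sup; first by exists 0.
    move=> t [/andP[t0 t1] Ht]; have := Ht u Tu.
    rewrite ler_pdivlMr // /G => h; nra.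
  rewrite ler_pdivlMr //; lra.
exists (comb xs ys s); apply/le_anti/andP; split.
  apply: phi_le => u Tu; have := FG u s; have := Gs u Tu; rewrite /cpl /=; lra.
rewrite leNgt; apply/negP => /phi_lt [d [d0 Hd]].
have Gd : forall u, T u -> G u s <= - d.
  move=> u Tu; have := FG u s; have := Hd u Tu; rewrite /cpl /=; lra.
pose l := d / (2 * (K + d)).
have Kd : 0 < K + d by lra.
have l0 : 0 < l by rewrite /l divr_gt0 // mulr_gt0.
have lK : l * (K + d) = d / 2 by rewrite /l invfM mulrA -mulrA mulVf ?mulr1 // gt_eqF.
have l1 : l <= 1.
  have : l * K <= l * (K + d) by apply: ler_wpM2l; [exact: ltW|lra].
  have : l * K >= 0 by rewrite mulr_ge0 // ltW.
  rewrite lK; nra.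
pose t := s + l * (1 - s).
have St : S t.
  split; first by apply/andP; split; rewrite /t; nra.
  move=> u Tu.
  have -> : G u t = (1 - l) * G u s + l * b u by rewrite /G /t; ring.
  have h1 : (1 - l) * G u s <= (1 - l) * (- d) by apply: ler_wpM2l; [lra|exact: Gd].
  have h2 : l * b u <= l * K by apply: ler_wpM2l; [exact: ltW|exact: HK].
  nra.
have ts : t <= s by exact: sup_upper_bound.
have s1' : s = 1 by rewrite /t in ts; nra.
have : (phi T (x, ys) <= (cpl (x, ys) - d)%:E)%E.
  apply: phi_le => u Tu; have := Gd u Tu; rewrite s1' /G /b; lra.
move=> h; have := le_trans Hc h; rewrite lee_fin; lra.
Qed.

End Aux.

Theorem theorem2p11 (R : realType) (X : tvsType R)
  (hX : hausdorff_space X) (ntX : exists x : X, x != 0)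
  (T : set (X * dual X)) (V : set X) :
  V `&` domain T !=set0 ->
  ((locates V T <->
      (V_NI V T /\
       PrX [set z | phi (restr T V) z = (cpl z)%:E] `&` V `<=` domain T)) /\
   (locates V T <->
      (PrX (edom (phi (restr T V))) `&` V `<=`
         PrX ([set z | (cpl z)%:E <= phi (restr T V) z]%E `&` edom (phi (restr T V))) /\
       PrX [set z | phi (restr T V) z = (cpl z)%:E] `&` V `<=` domain T))) /\
  (Mon (restr T V) ->
   (locates V T <->
      (V_NI V T /\
       PrX [set z | phi (restr T V) z = (cpl z)%:E] `&` V = domain T `&` V))).
Proof.
move=> _.
have i_ii : locates V T <-> (V_NI V T /\
       PrX [set z | phi (restr T V) z = (cpl z)%:E] `&` V `<=` domain T).
  split.
  - move=> L; split.
    + case=> x w /= Vx; have [h|h] := leP (phi (restr T V) (x, w)) (cpl (x, w))%:E.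
        have [y Txy] : domain T x by apply: L; split => //; exists (x, w).
        exact: (@base _ _ T V x y w Vx Txy).
      exact: ltW.
    + move=> x [[z /= hz <-] Vx]; apply: L; split => //; exists z => //=.
      by rewrite hz.
  - move=> [NI H] x [[z /= hz <-] Vx]; apply: H; split => //; exists z => //=.
    by apply/le_anti/andP; split => //; apply: NI.
split; first split.
- exact: i_ii.
- split.
  + move=> L; have [NI H] := i_ii.1 L; split => //.
    move=> x [[z /= hz <-] Vx]; exists z => //; split => //; exact: NI.
  + move=> [H1 H2] x [[[x0 xs] /= hz <-] Vx].
    have hf : (phi (restr T V) (x0, xs) < +oo)%E by apply: le_lt_trans hz _; exact: ltry.
    have [[x1 ys] [/= hc hf'] e] := H1 x0 (conj (ex_intro2 _ _ (x0, xs) hf erefl) Vx).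
    rewrite /= in e; subst x1.
    have [w hw] : exists w, phi (restr T V) (x0, w) = (cpl (x0, w))%:E.
      apply: (@hard _ _ _ x0 xs ys) => // u Tu.
      by have := le_trans (@phi_ge _ _ _ (x0, xs) _ Tu) hz; rewrite lee_fin.
    apply: H2; split => //; by exists (x0, w).
- move=> [Mo _]; split.
  + move=> L; have [NI H] := i_ii.1 L; split => //.
    apply/seteqP; split => x.
      by move=> hx; split; [exact: H|exact: hx.2].
    move=> [[y Txy] Vx]; split => //; exists (x, y) => //=.
    apply/le_anti/andP; split; last exact: (@base _ _ T V x y y Vx Txy).
    apply: phi_le => u Tu; have := Mo (x, y) u (conj Txy Vx) Tu.
    rewrite /term /cpl /= !pairingB; lra.
  + move=> [NI H]; apply: i_ii.2; split => //; rewrite H; by move=> x [].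
Qed.
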